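(* Let $G$ be a stochastic game with generalized-reachability objective $\mathcal T$ of dimension $n$, and let $L,U:S\to 2^{[0,1]^n}$ be functions such that $L(s)\subseteq\mathfrak A(s)\subseteq U(s)$ for all $s\in S$. Let $U'=\mathsf{DEFLATE\_SECs}(G,L,U)$. Then for all $s\in S$: (i) $U'(s)\subseteq U(s)$ (monotonicity), and (ii) $\mathfrak A(s)\subseteq U'(s)$ (soundness).
   Context: Stochastic game $G=(S,S_\Box,S_\circ,s_0,A,\mathrm{Av},\delta)$: $S$ finite set of states partitioned into Maximizer states $S_\Box$ and Minimizer states $S_\circ$, $s_0$ initial state, $A$ finite action set, $\mathrm{Av}(s)\neq\emptyset$ the actions available in $s$, $\delta(s,a)$ a probability distribution on $S$ for $a\in\mathrm{Av}(s)$. Strategies are history-dependent and randomized; a pair $(\sigma,\tau)$ of Maximizer/Minimizer strategies and a start state $s$ induce a probability measure $\mathbb P^{\sigma,\tau}_s$ on infinite paths. Objective $\mathcal T=(T_1,\dots,T_n)$, $T_i\subseteq S$; $\Diamond T_i$ is the event of visiting $T_i$. $\mathfrak A(s)$ is the set of $\vec v\in\mathbb R^n_{\ge0}$ such that some Maximizer strategy $\sigma$ satisfies $\mathbb P^{\sigma,\tau}_s(\Diamond T_i)\ge\vec v_i$ for all Minimizer strategies $\tau$ and all $i$. Geometry: vectors compared componentwise; $\mathit{dwc}(X)=\{y\in\mathbb R^n_{\ge0}\mid\exists x\in X: y\le x\}$; $\mathbf 1=\mathit{dwc}(\{\vec 1\})$; $c\cdot X=\{cx\mid x\in X\}$; $X+Y$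 is the Minkowski sum; $\mathrm{conv}$ the convex hull. Directions: $[\vec v]=\{\lambda\vec v\mid\lambda>0\}$ for $\vec v\ne\vec 0$, $\mathsf D$ = set of directions $[\vec v]$, $\vec v\in[0,1]^n\setminus\{\vec0\}$. $X[\mathbf d]=\sup\{\|\vec x\|\mid\vec x\in X,[\vec x]=\mathbf d\}$, $\sup\emptyset=0$. A region is a subset $R\subseteq\mathsf D$; when intersected with sets of points, $R$ is identified with $\{\vec v\in[0,1]^n\mid [\vec v]\in R\}$. For $f:S\to 2^{\mathbb R^n}$, $s\in S$, $a\in\mathrm{Av}(s)$: $f(s,a):=\big(\mathit{dwc}(\{\mathbb 1_{\mathcal T}(s)\})+\sum_{s'\in S}\delta(s,a)(s')\cdot f(s')\big)\cap\mathbf 1$, where $\mathbb 1_{\mathcal T}(s)_i=1$ if $s\in T_i$ and $0$ otherwise. End components: $(s,a)$ exits $T\subseteq S$ if some $s'$ with $\delta(s,a)(s')>0$ is not in $T$; $\mathsf{Exits}(T)$ is the set of such pairs with $s\in T$, $a\in\mathrm{Av}(s)$. A nonempty $T\subseteq S$ is an end component (EC) if there is a nonempty set $B$ of actions available in $T$ such that no $(s,a)$ with $s\in T$, $a\in B\cap\mathrm{Av}(s)$ exits $T$, and any two states of $T$ are connected by a path staying in $T$ and using only actions of $B$. A maximal EC (MEC) is an EC not strictly contained in another EC; $\mathsf{MEC}(G)$ is the set of MECs of $G$. For $T\subseteq S$ and a restriction $\mathrm{Av}'$ of $\mathrm{Av}$, $\mathsf{MEC}(T|_{\mathrm{Av}'})$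 denotes the MECs of the game restricted to states in $T$ and actions in $\mathrm{Av}'$. Best exit: for $T\subseteq S$ and $f:S\to2^{\mathbb R^n}$, $\mathsf{exit}[f](T):=\big(\mathit{dwc}(\{\sum_{s\in T}\mathbb 1_{\mathcal T}(s)\})+\mathrm{conv}(\bigcup_{(s,a)\in\mathsf{Exits}(T),\,s\in S_\Box} f(s,a))\big)\cap\mathbf 1$, with the convention $\bigcup_\emptyset=\{\vec0\}$. Procedures. $\mathsf{GET\_REGIONS}(T,L)$: start with $\mathcal R=\{\mathsf D\}$; for each $s\in T\cap S_\circ$, for each $B\subseteq\mathrm{Av}(s)$ let $R_B=\{\mathbf d\in\mathsf D\mid B=\arg\min_{a\in\mathrm{Av}(s)}L(s,a)[\mathbf d]\}$, let $\mathcal R'$ be the set of nonempty $R_B$, and replace $\mathcal R$ by the common refinement of $\mathcal R$ and $\mathcal R'$ (coarsest partition containing all sets $R_1\cap R_2$, $R_1\in\mathcal R,R_2\in\mathcal R'$); return $\mathcal R$. $\mathsf{FIND\_SECs}(T,L,R)$: pick any $\mathbf d\in R$; let $\mathrm{Av}'(s)=\mathrm{Av}(s)$ for $s\notin T\cap S_\circ$ and $\mathrm{Av}'(s)=\{a\in\mathrm{Av}(s)\mid L(s,a)[\mathbf d]=\min_{b\in\mathrm{Av}(s)}L(s,b)[\mathbf d]\}$ for $s\in T\cap S_\circ$; return $\mathsf{MEC}(T|_{\mathrm{Av}'})$. $\mathsf{DEFLATE\_SECs}(G,L,U)$: for states $s$ not in any MEC set $U'(s)=U(s)$; for states in MECs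 initialize $U'(s)=\{\vec 0\}$; for each $T\in\mathsf{MEC}(G)$, let $\mathcal R=\mathsf{GET\_REGIONS}(T,L)$; for each $R\in\mathcal R$, let $\mathcal S=\mathsf{FIND\_SECs}(T,L,R)$, and for each $s\in T$: if $s\in C$ for some $C\in\mathcal S$ then $U'(s)\leftarrow U'(s)\cup(U(s)\cap\mathsf{exit}[U](C)\cap R)$, else $U'(s)\leftarrow U'(s)\cup(U(s)\cap R)$; return $U'$. *)

(* Defs.v *)
From HB Require Import structures.
From mathcomp Require Import all_boot all_order all_algebra.
From mathcomp Require Import boolp classical_sets reals.
From Stdlib Require Import ClassicalEpsilon.

Set Implicit Arguments.
Unset Strict Implicit.
Unset Printing Implicit Defensive.

Import Order.TTheory GRing.Theory Num.Theory.
Local Open Scope classical_set_scope.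
Local Open Scope ring_scope.

(* A stochastic game G = (S, S_Box, S_circ, s0, A, Av, delta).
   States : finType S; actions : finType A; [isMax s] iff s is a Maximizer
   state (S_Box), otherwise s is a Minimizer state (S_circ). *)
Record game (R : realType) (S A : finType) := Game {
  s_init : S;
  isMax : pred S;
  Av : S -> {set A};
  delta : S -> A -> S -> R }.

Section Games.
Variables (R : realType) (S A : finType) (n : nat).
Variable G : game R S A.
Variable Tg : 'I_n -> {set S}.

Local Notation isMax := (isMax G).
Local Notation Av := (Av G).
Local Notation delta := (delta G).

Definition wf_game : Prop :=
  (forall s, Av s != finset.set0) /\
  (forall s a, a \in Av s ->
     (forall s', 0 <= delta s a s') /\ \sum_(s' : S) delta s a s' = 1).

(* A history s_0 a_0 s_1 ... a_{k-1} s_k : the list of (s_j, a_j) pairs and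
   the current state s_k. *)
Definition hist := (seq (S * A) * S)%type.
Definition extend (h : hist) (a : A) (s' : S) : hist :=
  (rcons h.1 (h.2, a), s').

Definition strategy := hist -> A -> R.

Definition valid_strategy (pl : bool) (sg : strategy) : Prop :=
  forall h : hist, isMax h.2 = pl ->
    (forall a, 0 <= sg h a) /\ \sum_(a : A) sg h a = 1 /\
    (forall a, sg h a != 0 -> a \in Av h.2).

Definition choice (sg tau : strategy) (h : hist) : A -> R :=
  if isMax h.2 then sg h else tau h.

Fixpoint reach_within (T : {set S}) (sg tau : strategy) (k : nat) (h : hist)
    : R :=
  if h.2 \in T then 1 else
  match k with
  | 0 => 0
  | k'.+1 => \sum_(a : A) choice sg tau h a *
               \sum_(s' : S) delta h.2 a s' *
                  reach_within T sg tau k' (extend h a s')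
  end.

(* P^{sg,tau}_s (<> T) : by continuity of the measure from below, the
   probability of the event <>T is the supremum of the probabilities of the
   events "T is visited within k steps". *)
Definition prob_reach (sg tau : strategy) (s : S) (T : {set S}) : R :=
  sup (range (fun k => reach_within T sg tau k ([::], s))).

Definition vec := 'rV[R]_n.

Definition achievable (s : S) : set vec :=
  [set v | (forall i, 0 <= v ord0 i) /\
     exists sg, valid_strategy true sg /\
       forall tau, valid_strategy false tau ->
         forall i, v ord0 i <= prob_reach sg tau s (Tg i)].

Definition unit_cube : set vec :=
  [set x | forall i, 0 <= x ord0 i <= 1].

Definition dwc (X : set vec) : set vec :=
  [set y | (forall i, 0 <= y ord0 i) /\
     exists2 x, X x & forall i, y ord0 i <= x ord0 i].

Definition one_set : set vec := dwc [set const_mx 1].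

Definition scale_set (c : R) (X : set vec) : set vec := [set c *: x | x in X].

Definition msum (X Y : set vec) : set vec :=
  [set z | exists2 x, X x & exists2 y, Y y & z = x + y].

Definition conv (X : set vec) : set vec :=
  [set z | exists (m : nat) (w : 'I_m -> R) (p : 'I_m -> vec),
     (forall j, 0 <= w j /\ X (p j)) /\ \sum_(j < m) w j = 1 /\
     z = \sum_(j < m) w j *: p j].

Definition ind (s : S) : vec := \row_i (if s \in Tg i then 1 else 0).

Definition dir := set vec.
Definition dirof (v : vec) : dir := [set x | exists2 l : R, 0 < l & x = l *: v].
Definition Dset : set dir :=
  [set d | exists v, unit_cube v /\ v <> 0 /\ d = dirof v].

Definition vnorm (x : vec) : R := Num.sqrt (\sum_i x ord0 i ^+ 2).

(* X[d]  (note: sup set0 = 0 in mathcomp-reals) *)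
Definition dval (X : set vec) (d : dir) : R :=
  sup [set vnorm x | x in [set x | X x /\ dirof x = d]].

Definition region_pts (Rg : set dir) : set vec :=
  [set v | unit_cube v /\ Rg (dirof v)].

Definition sa_val (f : S -> set vec) (s : S) (a : A) : set vec :=
  msum (dwc [set ind s])
       (foldr (fun s' acc => msum (scale_set (delta s a s') (f s')) acc)
              [set 0] (enum S))
  `&` one_set.

Definition exits (T : {set S}) (s : S) (a : A) : Prop :=
  exists s', 0 < delta s a s' /\ s' \notin T.

Definition ec_edge (T : {set S}) (B : {set A}) (Av' : S -> {set A}) : rel S :=
  fun x y => [&& x \in T, y \in T &
                 [exists a in B, (a \in Av' x) && (0 < delta x a y)]].

Definition EC_in (W : {set S}) (Av' : S -> {set A}) (T : {set S}) : Prop :=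
  (T != finset.set0) /\ T \subset W /\
  exists B : {set A}, (B != finset.set0) /\
    B \subset [set a | [exists s in T, a \in Av' s]]%SET /\
    (forall s a, s \in T -> a \in B -> a \in Av' s -> ~ exits T s a) /\
    (forall x y, x \in T -> y \in T -> connect (ec_edge T B Av') x y).

Definition MEC_in (W : {set S}) (Av' : S -> {set A}) (T : {set S}) : Prop :=
  EC_in W Av' T /\
  forall T', EC_in W Av' T' -> T \subset T' -> T' = T.

Definition MEC (T : {set S}) : Prop := MEC_in [set: S]%SET Av T.

Definition exit_set (f : S -> set vec) (T : {set S}) : set vec :=
  let P := fun s a => [/\ s \in T, isMax s, a \in Av s & exits T s a] in
  msum (dwc [set \sum_(s in T) ind s])
       (conv [set x | (exists s a, P s a /\ sa_val f s a x) \/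
                      (~ (exists s a, P s a) /\ x = 0)])
  `&` one_set.

Definition argmin_act (L : S -> set vec) (s : S) (d : dir) : {set A} :=
  [set a in Av s | [forall b in Av s,
     dval (sa_val L s a) d <= dval (sa_val L s b) d]]%SET.

Definition R_B (L : S -> set vec) (s : S) (B : {set A}) : set dir :=
  [set d | Dset d /\ B = argmin_act L s d].

Definition refine (P1 P2 : set (set dir)) : set (set dir) :=
  [set Rg | (exists R1 R2, P1 R1 /\ P2 R2 /\ Rg = R1 `&` R2) /\ Rg !=set0].

Definition GET_REGIONS (T : {set S}) (L : S -> set vec) : set (set dir) :=
  foldl (fun P s => refine P [set Rg | (exists B, Rg = R_B L s B) /\ Rg !=set0])
        [set Dset] (enum [set s in T | ~~ isMax s]%SET).

Definition restr_av (T : {set S}) (L : S -> set vec) (d : dir) : S -> {set A} :=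
  fun s => if (s \in T) && ~~ isMax s then argmin_act L s d else Av s.

Definition pick_dir (Rg : set dir) : dir := epsilon (inhabits set0) Rg.

Definition FIND_SECs (T : {set S}) (L : S -> set vec) (Rg : set dir)
    : set {set S} :=
  MEC_in T (restr_av T L (pick_dir Rg)).

Definition region_contrib (L U : S -> set vec) (T : {set S}) (Rg : set dir)
    (s : S) : set vec :=
  let SC := FIND_SECs T L Rg in
  [set x | ((exists C, SC C /\ s \in C) /\
              exists C, [/\ SC C, s \in C, U s x, exit_set U C x &
                            region_pts Rg x])
        \/ (~ (exists C, SC C /\ s \in C) /\ U s x /\ region_pts Rg x)].

Definition DEFLATE_SECs (L U : S -> set vec) : S -> set vec :=
  fun s =>
    [set x | (~ (exists T, MEC T /\ s \in T) /\ U s x) \/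
             ((exists T, MEC T /\ s \in T) /\
               (x = 0 \/ exists T Rg, [/\ MEC T, s \in T,
                  GET_REGIONS T L Rg & region_contrib L U T Rg s x]))].

End Games.

(* Main.v *)
Require Import Defs.
From HB Require Import structures.
From mathcomp Require Import all_boot all_order all_algebra.
From mathcomp Require Import boolp classical_sets reals.
From mathcomp Require Import ring.

Local Open Scope classical_set_scope.
Local Open Scope ring_scope.

Module P1.

Set Implicit Arguments.
Unset Strict Implicit.
Unset Printing Implicit Defensive.
Import Order.TTheory GRing.Theory Num.Theory.
Local Open Scope classical_set_scope.
Local Open Scope ring_scope.

Section Supn.
Variable R : realType.
Definition supn (u : nat -> R) := sup (range u).

Lemma supn_ub (u : nat -> R) B k : (forall j, u j <= B) -> u k <= supn u.
Proof.
move=> hB; apply: sup_upper_bound; last by exists k.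
split; first by exists (u 0%N), 0%N.
by exists B => _ [j _ <-].
Qed.

Lemma supn_le (u : nat -> R) B : (forall j, u j <= B) -> supn u <= B.
Proof.
move=> hB; apply: ge_sup; first by exists (u 0%N), 0%N.
by move=> _ [j _ <-].
Qed.

Lemma supn_approx (u : nat -> R) B e : (forall j, u j <= B) -> 0 < e ->
  exists k, supn u - e < u k.
Proof.
move=> hB he.
have hs : has_sup (range u).
  split; first by exists (u 0%N), 0%N.
  by exists B => _ [j _ <-].
by have [x [k _ <-] hk] := sup_adherent he hs; exists k.
Qed.

Lemma supn_ge (u : nat -> R) B x : (forall j, u j <= B) ->
  (forall e, 0 < e -> exists k, x - e <= u k) -> x <= supn u.
Proof.
move=> hB h; apply/ler_addgt0Pr => e he.
have [k hk] := h e he; rewrite -lerBlDr (le_trans hk) //.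
exact: (supn_ub _ hB).
Qed.

Lemma supn_mono (u v : nat -> R) B : (forall j, v j <= B) ->
  (forall j, u j <= v j) -> supn u <= supn v.
Proof.
move=> hB huv; apply: supn_le => j.
by apply: le_trans (huv j) _; apply: (supn_ub _ hB).
Qed.


Lemma ndS_mono (u : nat -> R) : (forall k, u k <= u k.+1) ->
  forall k k', (k <= k')%N -> u k <= u k'.
Proof.
move=> hu k; elim=> [|k' ih]; first by rewrite leqn0 => /eqP ->.
rewrite leq_eqVlt => /orP [/eqP -> //|]; rewrite ltnS => /ih h1.
exact: le_trans h1 (hu _).
Qed.

Lemma supnD (u v : nat -> R) B : (forall k, u k <= u k.+1) -> (forall k, v k <= v k.+1) ->
  (forall k, u k <= B) -> (forall k, v k <= B) ->
  supn (fun k => u k + v k) = supn u + supn v.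
Proof.
move=> mu mv bu bv; apply/eqP; rewrite eq_le; apply/andP; split.
  by apply: supn_le => k; apply: lerD; apply: (supn_ub _ (B := B)).
have bw : forall k, u k + v k <= B + B by move=> k; apply: lerD.
apply: (supn_ge bw) => e he.
have he2 : 0 < e / 2 by rewrite divr_gt0.
have [k1 h1] := supn_approx bu he2; have [k2 h2] := supn_approx bv he2.
exists (maxn k1 k2).
have e2 : e = e / 2 + e / 2 by rewrite -splitr.
rewrite {1}e2 opprD addrACA; apply: lerD.
  apply: (le_trans (ltW h1)); apply: ndS_mono => //; exact: leq_maxl.
apply: (le_trans (ltW h2)); apply: ndS_mono => //; exact: leq_maxr.
Qed.

Lemma supn_const c : supn (fun _ : nat => c) = c.
Proof.
apply/eqP; rewrite eq_le; apply/andP; split; first by apply: supn_le.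
by apply: (supn_ub 0 (B := c)).
Qed.

Lemma supnZ (u : nat -> R) B c : 0 <= c -> (forall k, u k <= B) ->
  supn (fun k => c * u k) = c * supn u.
Proof.
move=> c0 bu; have [->|cp] := eqVneq c 0.
  by rewrite mul0r; under eq_fun do rewrite mul0r; rewrite supn_const.
have cp' : 0 < c by rewrite lt_def cp c0.
have bw : forall k, c * u k <= c * B by move=> k; rewrite ler_wpM2l.
apply/eqP; rewrite eq_le; apply/andP; split.
  by apply: supn_le => k; rewrite ler_wpM2l //; apply: (supn_ub _ (B := B)).
apply: (supn_ge bw) => e he.
have hec : 0 < e / c by rewrite divr_gt0.
have [k hk] := supn_approx bu hec; exists k.
have -> : e = c * (e / c) by rewrite mulrC divfK.
by rewrite -mulrBr ler_wpM2l // ltW.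
Qed.

End Supn.

End P1.
Import P1.

Module P2.

Set Implicit Arguments.
Unset Strict Implicit.
Unset Printing Implicit Defensive.
Import Order.TTheory GRing.Theory Num.Theory.
Local Open Scope classical_set_scope.
Local Open Scope ring_scope.

Section Basics.
Variables (R : realType) (S A : finType) (n : nat) (G : game R S A).
Variable Tg : 'I_n -> {set S}.
Hypothesis wf : wf_game G.
Local Notation isMax := (isMax G).
Local Notation Av := (Av G).
Local Notation delta := (delta G).
Local Notation reach := (reach_within G).
Local Notation strategy := (strategy R S A).
Local Notation hist := (hist S A).

Lemma Av_nonempty s : Av s != finset.set0.
Proof. by case: wf. Qed.

Lemma d_ge0 s a s' : a \in Av s -> 0 <= delta s a s'.
Proof. by case: wf => _ h /h [h1 _]. Qed.

Lemma d_sum1 s a : a \in Av s -> \sum_s' delta s a s' = 1.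
Proof. by case: wf => _ h /h [_ h2]. Qed.

Definition distr_on (s : S) (c : A -> R) :=
  (forall a, 0 <= c a) /\ \sum_a c a = 1 /\ (forall a, c a != 0 -> a \in Av s).

Lemma valid_distr pl (sg : strategy) h : valid_strategy G pl sg ->
  isMax h.2 = pl -> distr_on h.2 (sg h).
Proof. by move=> v e; have [? [? ?]] := v h e. Qed.

Lemma valid_choice (sg tau : strategy) h : valid_strategy G true sg ->
  valid_strategy G false tau -> distr_on h.2 (Defs.choice G sg tau h).
Proof.
rewrite /Defs.choice => vs vt; case hm: (isMax h.2).
  exact: valid_distr vs hm.
exact: valid_distr vt hm.
Qed.

Definition wsum s (c : A -> R) (f : A -> S -> R) :=
  \sum_a c a * \sum_s' delta s a s' * f a s'.

Lemma wsum_le s c f g : distr_on s c ->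
  (forall a s', c a != 0 -> delta s a s' != 0 -> f a s' <= g a s') ->
  wsum s c f <= wsum s c g.
Proof.
move=> [c0 [_ cA]] hfg; apply: ler_sum => a _.
have [->|ca] := eqVneq (c a) 0; first by rewrite !mul0r.
rewrite ler_wpM2l //; apply: ler_sum => s' _.
have [->|da] := eqVneq (delta s a s') 0; first by rewrite !mul0r.
by rewrite ler_wpM2l ?d_ge0 ?cA // hfg.
Qed.

Lemma wsum_const s c B : distr_on s c -> wsum s c (fun _ _ => B) = B.
Proof.
move=> [c0 [c1 cA]]; rewrite /wsum.
transitivity (\sum_a c a * B); last by rewrite -mulr_suml c1 mul1r.
apply: eq_bigr => a _.
have [->|ca] := eqVneq (c a) 0; first by rewrite !mul0r.
by rewrite -mulr_suml d_sum1 ?mul1r // cA.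
Qed.

Lemma wsum_ge0 s c f : distr_on s c ->
  (forall a s', c a != 0 -> delta s a s' != 0 -> 0 <= f a s') -> 0 <= wsum s c f.
Proof.
move=> dc h; rewrite -(wsum_const 0 dc); exact: wsum_le.
Qed.

Lemma wsum_leB s c f B : distr_on s c ->
  (forall a s', c a != 0 -> delta s a s' != 0 -> f a s' <= B) -> wsum s c f <= B.
Proof.
move=> dc h; rewrite -[X in _ <= X](wsum_const B dc); exact: wsum_le.
Qed.

Lemma reachS T sg tau k h : reach T sg tau k.+1 h =
  if h.2 \in T then 1 else
  wsum h.2 (Defs.choice G sg tau h) (fun a s' => reach T sg tau k (extend h a s')).
Proof. by []. Qed.

Lemma reach0 T sg tau h : reach T sg tau 0 h = if h.2 \in T then 1 else 0.
Proof. by []. Qed.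

Section Valid.
Variables (sg tau : strategy).
Hypotheses (vs : valid_strategy G true sg) (vt : valid_strategy G false tau).

Lemma reach_ge0 T k h : 0 <= reach T sg tau k h.
Proof.
elim: k h => [|k ih] h; first by rewrite reach0; case: ifP.
rewrite reachS; case: ifP => // _.
apply: wsum_ge0; [exact: valid_choice|] => *; exact: ih.
Qed.

Lemma reach_le1 T k h : reach T sg tau k h <= 1.
Proof.
elim: k h => [|k ih] h; first by rewrite reach0; case: ifP.
rewrite reachS; case: ifP => // _.
apply: wsum_leB; [exact: valid_choice|] => *; exact: ih.
Qed.

Lemma reach_monoS T k h : reach T sg tau k h <= reach T sg tau k.+1 h.
Proof.
elim: k h => [|k ih] h.
  rewrite reach0; case: ifP => hT; first by rewrite reachS hT.
  exact: reach_ge0.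
rewrite reachS [X in _ <= X]reachS; case: ifP => // _.
apply: wsum_le; [exact: valid_choice|] => *; exact: ih.
Qed.

Lemma reach_mono T k k' h : (k <= k')%N -> reach T sg tau k h <= reach T sg tau k' h.
Proof.
elim: k' => [|k' ih]; first by rewrite leqn0 => /eqP ->.
rewrite leq_eqVlt => /orP [/eqP -> //|]; rewrite ltnS => /ih h1.
exact: le_trans h1 (reach_monoS _ _ _).
Qed.

End Valid.

Definition preach T (sg tau : strategy) h := supn (fun k => reach T sg tau k h).

Lemma prob_reachE sg tau s T : prob_reach G sg tau s T = preach T sg tau ([::], s).
Proof. by []. Qed.

Section Valid2.
Variables (sg tau : strategy).
Hypotheses (vs : valid_strategy G true sg) (vt : valid_strategy G false tau).

Lemma preach_ge T k h : reach T sg tau k h <= preach T sg tau h.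
Proof. apply: (supn_ub _ (B := 1)) => j; exact: reach_le1. Qed.

Lemma preach_ge0 T h : 0 <= preach T sg tau h.
Proof. exact: le_trans (reach_ge0 vs vt _ 0 _) (preach_ge _ 0 _). Qed.

Lemma preach_le1 T h : preach T sg tau h <= 1.
Proof. apply: supn_le => j; exact: reach_le1. Qed.

Lemma preach_approx T h e : 0 < e -> exists k, preach T sg tau h - e < reach T sg tau k h.
Proof. apply: supn_approx => j; exact: reach_le1. Qed.

End Valid2.

Definition strat0 : strategy := fun h a =>
  if [pick b in Av h.2] is Some b then (b == a)%:R else 0.

Lemma strat0_distr h : distr_on h.2 (strat0 h).
Proof.
rewrite /strat0; case: pickP => [b hb|h0]; last first.
  by exfalso; have /set0Pn [a ha] := Av_nonempty h.2; move: (h0 a); rewrite ha.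
split; first by move=> a; case: (b == a).
split; first by rewrite (bigD1 b) //= eqxx big1 ?addr0 // => a; rewrite eq_sym => /negbTE ->.
move=> a; have [<- //|_] := eqVneq b a; by rewrite eqxx.
Qed.

Lemma strat0_valid pl : valid_strategy G pl strat0.
Proof. move=> h _; have [? [? ?]] := strat0_distr h; by []. Qed.

Lemma valid_of_distr pl (sg : strategy) : (forall h, distr_on h.2 (sg h)) ->
  valid_strategy G pl sg.
Proof. by move=> hd h _; have [? [? ?]] := hd h. Qed.

End Basics.

End P2.
Import P2.

Module P3.

Set Implicit Arguments.
Unset Strict Implicit.
Unset Printing Implicit Defensive.
Import Order.TTheory GRing.Theory Num.Theory.
Local Open Scope classical_set_scope.
Local Open Scope ring_scope.

Section Hist.
Variables (R : realType) (S A : finType) (G : game R S A).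
Local Notation isMax := (isMax G).
Local Notation Av := (Av G).
Local Notation delta := (delta G).
Local Notation reach := (reach_within G).
Local Notation strategy := (strategy R S A).
Local Notation hist := (hist S A).

Definition hcat (g h : hist) : hist := (g.1 ++ h.1, h.2).
Definition hstart (h : hist) : S := head h.2 (map fst h.1).
Definition shift (sg : strategy) (g : hist) : strategy := fun h => sg (hcat g h).

Lemma hcat_extend g h a s' : hcat g (extend h a s') = extend (hcat g h) a s'.
Proof. by rewrite /hcat /extend /= rcons_cat. Qed.

Lemma hstart_extend h a s' : hstart (extend h a s') = hstart h.
Proof. by case: h => [[|p l] c]. Qed.

Lemma shift_valid pl sg g : valid_strategy G pl sg -> valid_strategy G pl (shift sg g).
Proof. by move=> v h; exact: (v (hcat g h)). Qed.

Variable C : {set S}.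

Definition mexit (p : S * A) : bool :=
  [&& p.1 \in C, isMax p.1 & [exists s', (0 < delta p.1 p.2 s') && (s' \notin C)]].

Fixpoint fe (l : seq (S * A)) : option (seq (S * A) * (S * A) * seq (S * A)) :=
  match l with
  | [::] => None
  | p :: l' => if mexit p then Some ([::], p, l') else
      if fe l' is Some (l1, q, l2) then Some (p :: l1, q, l2) else None
  end.

Lemma fe_hit l1 p l2 : fe l1 = None -> mexit p -> fe (l1 ++ p :: l2) = Some (l1, p, l2).
Proof.
elim: l1 => [|q l1 ih] /=; first by move=> _ ->.
by case: ifP => // _; case E: (fe l1) => [[[? ?] ?]|] // _ /ih ->.
Qed.

Lemma fe_rcons l p : fe l = None -> ~~ mexit p -> fe (rcons l p) = None.
Proof.
elim: l => [|q l ih] /=; first by move=> _ /negbTE ->.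
by case: ifP => // _; case E: (fe l) => [[[? ?] ?]|] // _ /ih ->.
Qed.

Definition glue (tau0 : strategy) (taug : hist -> strategy) : strategy := fun h =>
  match fe h.1 with
  | Some (l1, p, l2) => taug (rcons l1 p, hstart (l2, h.2)) (l2, h.2)
  | None => tau0 h
  end.

Lemma glue_valid tau0 taug : valid_strategy G false tau0 ->
  (forall g, valid_strategy G false (taug g)) -> valid_strategy G false (glue tau0 taug).
Proof.
move=> v0 vg h hm; rewrite /glue; case: (fe h.1) => [[[l1 p] l2]|]; last exact: v0.
exact: (vg _ (l2, h.2)).
Qed.

Lemma glue_None tau0 taug h : fe h.1 = None -> glue tau0 taug h = tau0 h.
Proof. by rewrite /glue => ->. Qed.

Lemma glue_hcat tau0 taug l1 p s' h : fe l1 = None -> mexit p -> hstart h = s' ->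
  glue tau0 taug (hcat (rcons l1 p, s') h) = taug (rcons l1 p, s') h.
Proof.
move=> f0 mp hs; rewrite /glue /hcat /= cat_rcons fe_hit //.
by case: h hs => l c /= <-.
Qed.

Lemma reach_glue T sg tau0 taug l1 p s' k h : fe l1 = None -> mexit p -> hstart h = s' ->
  reach T sg (glue tau0 taug) k (hcat (rcons l1 p, s') h) =
  reach T (shift sg (rcons l1 p, s')) (taug (rcons l1 p, s')) k h.
Proof.
move=> f0 mp; elim: k h => [|k ih] h hs; first by [].
rewrite !reachS /=; case: ifP => // _.
rewrite /wsum /Defs.choice /=; apply: eq_bigr => a _.
rewrite glue_hcat //; congr (_ * _); apply: eq_bigr => s'' _.
by rewrite -hcat_extend ih // hstart_extend.
Qed.

End Hist.

End P3.
Import P3.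

Module P4.

Set Implicit Arguments.
Unset Strict Implicit.
Unset Printing Implicit Defensive.
Import Order.TTheory GRing.Theory Num.Theory.
Local Open Scope classical_set_scope.
Local Open Scope ring_scope.

Section ES.
Variables (R : realType) (S A : finType) (G : game R S A).
Hypothesis wf : wf_game G.
Local Notation isMax := (isMax G).
Local Notation Av := (Av G).
Local Notation delta := (delta G).
Local Notation reach := (reach_within G).
Local Notation strategy := (strategy R S A).
Local Notation hist := (hist S A).

Lemma ind_distr s b : b \in Av s -> distr_on G s (fun a => (b == a)%:R).
Proof.
move=> hb; split; first by move=> a; case: (b == a).
split; first by rewrite (bigD1 b) //= eqxx big1 ?addr0 // => a; rewrite eq_sym => /negbTE ->.
move=> a; have [<- //|_] := eqVneq b a; by rewrite eqxx.
Qed.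

Variables (C : {set S}) (sg : strategy) (s0 : S).
Hypothesis vs : valid_strategy G true sg.
Hypothesis hstay : forall t, t \in C -> ~~ isMax t ->
  exists b, b \in Av t /\ forall s', 0 < delta t b s' -> s' \in C.

Definition stayb t := [pick b in Av t | [forall s', (0 < delta t b s') ==> (s' \in C)]].

Definition tau0 : strategy := fun h a =>
  if (h.2 \in C) && ~~ isMax h.2 then
    (if stayb h.2 is Some b then (b == a)%:R else strat0 G h a)
  else strat0 G h a.

Lemma tau0_distr h : distr_on G h.2 (tau0 h).
Proof.
rewrite /tau0; case: ((h.2 \in C) && ~~ isMax h.2); last exact: (strat0_distr wf).
rewrite /stayb; case: pickP => [b hb|_]; last exact: (strat0_distr wf).
case/andP: hb => hb _; exact: ind_distr.
Qed.

Lemma tau0_valid : valid_strategy G false tau0.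
Proof. apply: valid_of_distr => h; exact: tau0_distr. Qed.

Lemma tau0_stay h a s' : h.2 \in C -> ~~ isMax h.2 -> tau0 h a != 0 ->
  0 < delta h.2 a s' -> s' \in C.
Proof.
move=> hC hM; rewrite /tau0 hC hM /= /stayb; case: pickP => [b hbb|h0].
  case/andP: hbb => hb /forallP hf.
  by have [<- _ /(implyP (hf s'))|_] := eqVneq b a; rewrite ?eqxx.
exfalso; have [b [hb hb2]] := hstay hC hM; move: (h0 b); rewrite hb /=.
by move/negP; apply; apply/forallP => s''; apply/implyP; exact: hb2.
Qed.

Definition cc (h : hist) := Defs.choice G sg tau0 h.

Lemma cc_distr h : distr_on G h.2 (cc h).
Proof. exact: valid_choice vs tau0_valid. Qed.

Definition good (e : hist) (a : A) := mexit G C (e.2, a) && (a \in Av e.2).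

Fixpoint ESum (k : nat) (h : hist) (f : hist -> A -> R) : R :=
  match k with
  | 0 => 0
  | k'.+1 => \sum_a cc h a * (if mexit G C (h.2, a) then f h a else
              \sum_s' delta h.2 a s' * ESum k' (extend h a s') f)
  end.

Lemma ESum_ext k h f g : (forall e a, good e a -> f e a = g e a) ->
  ESum k h f = ESum k h g.
Proof.
move=> hfg; elim: k h => [|k ih] h //=; apply: eq_bigr => a _.
have [c0 [_ cA]] := cc_distr h.
have [->|ca] := eqVneq (cc h a) 0; first by rewrite !mul0r.
case: ifP => hm; first by rewrite hfg // /good hm cA.
by congr (_ * _); apply: eq_bigr => s' _; rewrite ih.
Qed.

Lemma ESum_le k h f g : (forall e a, good e a -> f e a <= g e a) ->
  ESum k h f <= ESum k h g.
Proof.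
move=> hfg; elim: k h => [|k ih] h //=; apply: ler_sum => a _.
have [c0 [_ cA]] := cc_distr h.
have [->|ca] := eqVneq (cc h a) 0; first by rewrite !mul0r.
rewrite ler_wpM2l //; case: ifP => hm; first by rewrite hfg // /good hm cA.
apply: ler_sum => s' _; rewrite ler_wpM2l ?ih //; apply: d_ge0 => //; exact: cA.
Qed.

Lemma ESum_const k h (B : R) : ESum k h (fun _ _ => B) <= `|B|.
Proof.
elim: k h => [|k ih] h /=; first by [].
have [c0 [c1 cA]] := cc_distr h.
rewrite -[X in _ <= X]mul1r -c1 mulr_suml; apply: ler_sum => a _.
have [->|ca] := eqVneq (cc h a) 0; first by rewrite !mul0r.
rewrite ler_wpM2l //; case: ifP => _; first exact: ler_norm.
rewrite -[X in _ <= X]mul1r -(d_sum1 wf (cA _ ca)) mulr_suml; apply: ler_sum => s' _.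
by rewrite ler_wpM2l ?ih //; apply: d_ge0 => //; exact: cA.
Qed.

Lemma ESum0 k h : ESum k h (fun _ _ => 0) = 0.
Proof.
elim: k h => [|k ih] h //=; rewrite big1 // => a _.
case: ifP => _; first by rewrite mulr0.
by rewrite big1 ?mulr0 // => s' _; rewrite ih mulr0.
Qed.

Lemma ESum_ge0 k h f : (forall e a, good e a -> 0 <= f e a) -> 0 <= ESum k h f.
Proof. move=> hf; rewrite -(ESum0 k h); exact: ESum_le. Qed.

Lemma ESum_leB k h f B : 0 <= B -> (forall e a, good e a -> f e a <= B) -> ESum k h f <= B.
Proof.
move=> B0 hf; apply: le_trans (ESum_le k h hf) _.
by apply: le_trans (ESum_const _ _ _) _; rewrite ger0_norm.
Qed.

Lemma ESumD k h f g : ESum k h (fun e a => f e a + g e a) = ESum k h f + ESum k h g.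
Proof.
elim: k h => [|k ih] h /=; first by rewrite addr0.
rewrite -big_split /=; apply: eq_bigr => a _; rewrite -mulrDr; congr (_ * _).
case: ifP => _ //; rewrite -big_split /=; apply: eq_bigr => s' _.
by rewrite ih mulrDr.
Qed.

Lemma ESumZ k h f c : ESum k h (fun e a => c * f e a) = c * ESum k h f.
Proof.
elim: k h => [|k ih] h /=; first by rewrite mulr0.
rewrite mulr_sumr; apply: eq_bigr => a _; rewrite mulrCA; congr (_ * _).
case: ifP => _ //; rewrite mulr_sumr; apply: eq_bigr => s' _.
by rewrite ih mulrCA.
Qed.

Lemma ESum_sum (I : Type) (r : seq I) k h (F : I -> hist -> A -> R) :
  ESum k h (fun e a => \sum_(j <- r) F j e a) = \sum_(j <- r) ESum k h (F j).
Proof.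
elim: r => [|j r ih]; first by under ESum_ext do rewrite big_nil; rewrite ESum0 big_nil.
by under ESum_ext do rewrite big_cons; rewrite ESumD ih big_cons.
Qed.

Lemma ESum_monoS k h f : (forall e a, good e a -> 0 <= f e a) ->
  ESum k h f <= ESum k.+1 h f.
Proof.
move=> hf; elim: k h => [|k ih] h.
  by apply: (@ESum_ge0 1).
rewrite [X in X <= _]/= [X in _ <= X]/=; apply: ler_sum => a _.
have [c0 [_ cA]] := cc_distr h.
have [->|ca] := eqVneq (cc h a) 0; first by rewrite !mul0r.
rewrite ler_wpM2l //; case: ifP => hm //.
apply: ler_sum => s' _; rewrite ler_wpM2l ?ih //; apply: d_ge0 => //; exact: cA.
Qed.

Definition Eb (f : hist -> A -> R) := supn (fun K => ESum K ([::], s0) f).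

End ES.

End P4.
Import P4.

Module P5.

Set Implicit Arguments.
Unset Strict Implicit.
Unset Printing Implicit Defensive.
Import Order.TTheory GRing.Theory Num.Theory.
Local Open Scope classical_set_scope.
Local Open Scope ring_scope.

Section EB.
Variables (R : realType) (S A : finType) (G : game R S A).
Hypothesis wf : wf_game G.
Local Notation isMax := (isMax G).
Local Notation Av := (Av G).
Local Notation delta := (delta G).
Local Notation reach := (reach_within G).
Local Notation strategy := (strategy R S A).
Local Notation hist := (hist S A).
Variables (C : {set S}) (sg : strategy) (s0 : S).
Hypothesis vs : valid_strategy G true sg.
Hypothesis hstay : forall t, t \in C -> ~~ isMax t ->
  exists b, b \in Av t /\ forall s', 0 < delta t b s' -> s' \in C.

Local Notation ESum := (ESum G C sg).
Local Notation Eb := (Eb G C sg s0).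
Local Notation good := (good G C).

Definition bnd (f : hist -> A -> R) B := forall e a, good e a -> 0 <= f e a <= B.

Lemma ESum_bnd f B k h : 0 <= B -> bnd f B -> 0 <= ESum k h f <= B.
Proof.
move=> B0 hb; rewrite ESum_ge0 ?ESum_leB // => e a /hb /andP [] //.
Qed.

Lemma Eb_ub f B k : 0 <= B -> bnd f B -> ESum k ([::], s0) f <= Eb f.
Proof.
move=> B0 hb; apply: (supn_ub _ (B := B)) => j.
by case/andP: (ESum_bnd j ([::], s0) B0 hb).
Qed.

Lemma Eb_bnd f B : 0 <= B -> bnd f B -> 0 <= Eb f <= B.
Proof.
move=> B0 hb; apply/andP; split.
  by apply: le_trans (Eb_ub 0 B0 hb); case/andP: (ESum_bnd 0 ([::], s0) B0 hb).
by apply: supn_le => j; case/andP: (ESum_bnd j ([::], s0) B0 hb).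
Qed.

Lemma Eb_ext f g : (forall e a, good e a -> f e a = g e a) -> Eb f = Eb g.
Proof. by move=> hfg; rewrite /P4.Eb; under eq_fun do rewrite (ESum_ext wf vs _ _ hfg). Qed.

Lemma Eb_le f g B : 0 <= B -> bnd g B -> (forall e a, good e a -> f e a <= g e a) ->
  Eb f <= Eb g.
Proof.
move=> B0 hb hfg; apply: (supn_mono (B := B)).
  by move=> j; case/andP: (ESum_bnd j ([::], s0) B0 hb).
by move=> j; apply: (ESum_le wf vs).
Qed.

Lemma EbD f g B1 B2 : 0 <= B1 -> 0 <= B2 -> bnd f B1 -> bnd g B2 ->
  Eb (fun e a => f e a + g e a) = Eb f + Eb g.
Proof.
move=> B10 B20 hf hg; rewrite /P4.Eb; under eq_fun do rewrite ESumD.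
apply: (supnD (B := B1 + B2)).
- move=> k; apply: (ESum_monoS wf vs) => e a /hf /andP [] //.
- move=> k; apply: (ESum_monoS wf vs) => e a /hg /andP [] //.
- move=> k; case/andP: (ESum_bnd k ([::], s0) B10 hf) => _ h.
  by apply: (le_trans h); rewrite lerDl.
- move=> k; case/andP: (ESum_bnd k ([::], s0) B20 hg) => _ h.
  by apply: (le_trans h); rewrite lerDr.
Qed.

Lemma EbZ f c B : 0 <= c -> 0 <= B -> bnd f B -> Eb (fun e a => c * f e a) = c * Eb f.
Proof.
move=> c0 B0 hf; rewrite /P4.Eb; under eq_fun do rewrite ESumZ.
apply: (supnZ (B := B)) => // k; by case/andP: (ESum_bnd k ([::], s0) B0 hf).
Qed.

Lemma bnd_sum (I : Type) (r : seq I) (F : I -> hist -> A -> R) B :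
  0 <= B -> (forall j, bnd (F j) B) ->
  bnd (fun e a => \sum_(j <- r) F j e a) ((size r)%:R * B).
Proof.
move=> B0 hF e a he; elim: r => [|j r ih]; first by rewrite big_nil mul0r lexx.
case/andP: ih => i1 i2; case/andP: (hF j e a he) => j1 j2.
rewrite big_cons addr_ge0 //= -add1n natrD mulrDl mul1r lerD //.
Qed.

Lemma Eb_sum (I : Type) (r : seq I) (F : I -> hist -> A -> R) B :
  0 <= B -> (forall j, bnd (F j) B) ->
  Eb (fun e a => \sum_(j <- r) F j e a) = \sum_(j <- r) Eb (F j).
Proof.
move=> B0 hF; elim: r => [|j r ih].
  rewrite big_nil; under Eb_ext do rewrite big_nil.
  by rewrite /P4.Eb; under eq_fun do rewrite ESum0; rewrite supn_const.
under Eb_ext do rewrite big_cons.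
rewrite (EbD (B1 := B) (B2 := (size r)%:R * B)) ?ih ?big_cons //.
  by rewrite mulr_ge0.
exact: bnd_sum.
Qed.

Lemma cc_distr' h : distr_on G h.2 (cc G C sg h).
Proof. exact: (cc_distr wf C vs h). Qed.

Lemma ESum_sup (F : nat -> hist -> A -> R) (Fi : hist -> A -> R) :
  (forall k e a, good e a -> F k e a <= F k.+1 e a) ->
  (forall e a eps, good e a -> 0 < eps -> exists k, Fi e a - eps <= F k e a) ->
  forall K h eps, 0 < eps -> exists k, ESum K h Fi - eps <= ESum K h (F k).
Proof.
move=> Fm Fa; have Fm' : forall k k' e a, good e a -> (k <= k')%N -> F k e a <= F k' e a.
  move=> k k' e a he; apply: (@ndS_mono _ (fun j => F j e a)) => j; exact: Fm.
elim=> [|K ih] h eps he /=; first by exists 0%N; rewrite sub0r oppr_le0 ltW.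
have [c0 [c1 cA]] := cc_distr wf C vs h.
have hex : forall p : A * S, exists k : nat,
   (good h p.1 -> Fi h p.1 - eps <= F k h p.1) /\
   ESum K (extend h p.1 p.2) Fi - eps <= ESum K (extend h p.1 p.2) (F k).
  move=> [a s'] /=; have [k1 hk1] := ih (extend h a s') eps he.
  have [k2 hk2] : exists k, good h a -> Fi h a - eps <= F k h a.
    case: (boolP (good h a)) => hg; last by exists 0%N.
    by have [k hk] := Fa h a eps hg he; exists k.
  exists (maxn k1 k2); split.
    move=> hg; apply: le_trans (hk2 hg) _; apply: Fm' => //; exact: leq_maxr.
  apply: le_trans hk1 _; apply: (ESum_le wf vs) => e b hg; apply: Fm' => //; exact: leq_maxl.
have [kf hkf] := fin_all_exists hex.
exists (\max_(p : A * S) kf p).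
rewrite -[X in _ - X]mul1r -c1 mulr_suml -sumrB; apply: ler_sum => a _.
rewrite -mulrBr; have [->|ca] := eqVneq (cc G C sg h a) 0; first by rewrite !mul0r.
rewrite ler_wpM2l //; have aA := cA a ca.
case: ifP => hm.
  have hg : good h a by rewrite /good hm aA.
  pose s1 := h.2.
  apply: le_trans ((hkf (a, s1)).1 hg) _; apply: Fm' => //.
  exact: (@leq_bigmax_cond _ _ _ (a, s1)).
rewrite -[X in _ - X]mul1r -(d_sum1 wf aA) mulr_suml -sumrB; apply: ler_sum => s' _.
rewrite -mulrBr ler_wpM2l ?d_ge0 //; apply: le_trans (hkf (a, s')).2 _.
apply: (ESum_le wf vs) => e b hg; apply: Fm' => //.
exact: (@leq_bigmax_cond _ _ _ (a, s')).
Qed.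

Lemma Eb_sup (F : nat -> hist -> A -> R) (Fi : hist -> A -> R) B :
  0 <= B -> (forall k, bnd (F k) B) ->
  (forall k e a, good e a -> F k e a <= F k.+1 e a) ->
  (forall e a eps, good e a -> 0 < eps -> exists k, Fi e a - eps <= F k e a) ->
  Eb Fi <= supn (fun k => Eb (F k)).
Proof.
move=> B0 hb Fm Fa; apply: supn_le => K; apply/ler_addgt0Pr => eps he.
have [k hk] := ESum_sup Fm Fa K ([::], s0) he.
rewrite -lerBlDr (le_trans hk) //; apply: le_trans (Eb_ub K B0 (hb k)) _.
apply: (supn_ub _ (B := B)) => j; by case/andP: (Eb_bnd B0 (hb j)).
Qed.

End EB.

End P5.
Import P5.

Module P6.

Set Implicit Arguments.
Unset Strict Implicit.
Unset Printing Implicit Defensive.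
Import Order.TTheory GRing.Theory Num.Theory.
Local Open Scope classical_set_scope.
Local Open Scope ring_scope.

Section Decomp.
Variables (R : realType) (S A : finType) (G : game R S A).
Hypothesis wf : wf_game G.
Local Notation isMax := (isMax G).
Local Notation Av := (Av G).
Local Notation delta := (delta G).
Local Notation reach := (reach_within G).
Local Notation strategy := (strategy R S A).
Local Notation hist := (hist S A).
Variables (C : {set S}) (sg : strategy) (s0 : S).
Hypothesis vs : valid_strategy G true sg.
Hypothesis hstay : forall t, t \in C -> ~~ isMax t ->
  exists b, b \in Av t /\ forall s', 0 < delta t b s' -> s' \in C.

Local Notation ESum := (ESum G C sg).
Local Notation Eb := (Eb G C sg s0).
Local Notation good := (good G C).
Local Notation mexit := (mexit G C).
Local Notation fe := (fe G C).

Variable T : {set S}.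
Hypothesis hTC : forall t, t \in C -> t \notin T.
Variable taug : hist -> strategy.
Hypothesis vtg : forall g, valid_strategy G false (taug g).

Definition tgl := glue G C (tau0 G C) taug.

Definition fP (e : hist) (a : A) : R :=
  \sum_s' delta e.2 a s' *
    preach G T (shift sg (extend e a s')) (taug (extend e a s')) ([::], s').

Lemma fP_bnd : bnd G C fP 1.
Proof.
move=> e a /andP [_ aA]; apply/andP; split.
  apply: sumr_ge0 => s' _; rewrite mulr_ge0 ?d_ge0 //.
  exact: (preach_ge0 wf (shift_valid _ vs) (vtg _)).
rewrite -(d_sum1 wf aA); apply: ler_sum => s' _; rewrite ler_piMr ?d_ge0 //.
exact: (preach_le1 wf (shift_valid _ vs) (vtg _)).
Qed.

Lemma choice_tgl h : fe h.1 = None -> Defs.choice G sg tgl h = cc G C sg h.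
Proof. by move=> f0; rewrite /cc /Defs.choice; case: ifP => //; rewrite /tgl glue_None. Qed.

Lemma decomp k h : h.2 \in C -> fe h.1 = None -> reach T sg tgl k h <= ESum k h fP.
Proof.
elim: k h => [|k ih] h hC f0.
  by rewrite reach0 (negbTE (hTC hC)).
rewrite reachS (negbTE (hTC hC)) /wsum choice_tgl //=; apply: ler_sum => a _.
have [c0 [_ cA]] := cc_distr wf C vs h.
have [->|ca] := eqVneq (cc G C sg h a) 0; first by rewrite !mul0r.
have aA := cA a ca; rewrite ler_wpM2l //; case: ifP => hm.
  rewrite /fP; apply: ler_sum => s' _; rewrite ler_wpM2l ?d_ge0 //.
  have E : extend h a s' = hcat (rcons h.1 (h.2, a), s') ([::], s').
    by rewrite /hcat /extend /= cats0.
  rewrite {1}E reach_glue //.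
  exact: (preach_ge wf (shift_valid _ vs) (vtg _)).
apply: ler_sum => s' _.
have [->|dn] := eqVneq (delta h.2 a s') 0; first by rewrite !mul0r.
have dp : 0 < delta h.2 a s' by rewrite lt_def dn d_ge0.
rewrite ler_wpM2l ?d_ge0 //; apply: ih.
- case hM: (isMax h.2).
    move: hm; rewrite /P3.mexit /= hC hM /=; move/negbT; rewrite negb_exists.
    by move/forallP/(_ s'); rewrite dp /= negbK.
  apply: (tau0_stay hstay hC _ _ dp); first by rewrite hM.
  by move: ca; rewrite /cc /Defs.choice hM.
- by rewrite /extend /= fe_rcons // hm.
Qed.

Lemma decomp_preach : s0 \in C -> preach G T sg tgl ([::], s0) <= Eb fP.
Proof.
move=> hC; apply: supn_le => k; apply: le_trans (decomp k (h := ([::], s0)) hC erefl) _.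
exact: (Eb_ub wf s0 vs _ ler01 fP_bnd).
Qed.

End Decomp.

End P6.
Import P6.

Module P7.

Set Implicit Arguments.
Unset Strict Implicit.
Unset Printing Implicit Defensive.
Import Order.TTheory GRing.Theory Num.Theory.
Local Open Scope classical_set_scope.
Local Open Scope ring_scope.

Section Pi.
Variables (R : realType) (S A : finType) (G : game R S A).
Hypothesis wf : wf_game G.
Local Notation isMax := (isMax G).
Local Notation strategy := (strategy R S A).
Local Notation hist := (hist S A).

Fixpoint piAux (sg : strategy) (pre : seq (S * A)) (l : seq (S * A)) : R :=
  if l is p :: l' then (if isMax p.1 then sg (pre, p.1) p.2 else 1) * piAux sg (rcons pre p) l'
  else 1.

Lemma piAux_rcons sg pre l p : piAux sg pre (rcons l p) =
  piAux sg pre l * (if isMax p.1 then sg (pre ++ l, p.1) p.2 else 1).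
Proof.
elim: l pre => [|q l ih] pre /=; first by rewrite mulr1 mul1r cats0.
by rewrite ih mulrA cat_rcons.
Qed.

Definition pi sg (h : hist) := piAux sg [::] h.1.

Lemma pi_extend sg h b s'' :
  pi sg (extend h b s'') = pi sg h * (if isMax h.2 then sg h b else 1).
Proof. by case: h => l c; rewrite /pi /extend /= piAux_rcons. Qed.

Lemma distr_le1 s (c : A -> R) b : distr_on G s c -> 0 <= c b <= 1.
Proof.
move=> [c0 [c1 _]]; rewrite c0 -c1 (bigD1 b) //= lerDl sumr_ge0 //.
Qed.

Lemma pi_bnd sg h : valid_strategy G true sg -> 0 <= pi sg h <= 1.
Proof.
move=> vs; rewrite /pi; elim: h.1 [::] => [|p l ih] pre /=; first by rewrite ler01 lexx.
have hf : 0 <= (if isMax p.1 then sg (pre, p.1) p.2 else 1) <= 1.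
  case: ifP => hm; last by rewrite ler01 lexx.
  exact: distr_le1 (valid_distr vs (h := (pre, p.1)) hm).
case/andP: hf => f0 f1; case/andP: (ih (rcons pre p)) => i0 i1.
by rewrite mulr_ge0 //= mulr_ile1.
Qed.

End Pi.

Section Mix.
Variables (R : realType) (S A : finType) (G : game R S A).
Hypothesis wf : wf_game G.
Local Notation isMax := (isMax G).
Local Notation Av := (Av G).
Local Notation delta := (delta G).
Local Notation reach := (reach_within G).
Local Notation strategy := (strategy R S A).
Local Notation hist := (hist S A).
Variables (C : {set S}) (sg : strategy) (s0 : S).
Hypothesis vs : valid_strategy G true sg.

Local Notation ESum := (ESum G C sg).
Local Notation Eb := (Eb G C sg s0).
Local Notation good := (good G C).

Let EbZ' := @EbZ _ _ _ _ wf C sg s0 vs.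
Let Eb_sum' := @Eb_sum _ _ _ _ wf C sg s0 vs.
Let Eb_ext' := @Eb_ext _ _ _ _ wf C sg s0 vs.
Let Eb_bnd' := @Eb_bnd _ _ _ _ wf C sg s0 vs.

Lemma Eb0 : Eb (fun _ _ => 0) = 0.
Proof. by rewrite /P4.Eb; under eq_fun do rewrite ESum0; rewrite supn_const. Qed.

Lemma bndZ f c B : 0 <= c <= 1 -> bnd G C f B -> bnd G C (fun e a => c * f e a) B.
Proof.
move=> /andP [c0 c1] hb e a /hb /andP [f0 f1]; rewrite mulr_ge0 //=.
apply: le_trans f1; exact: ler_piMl.
Qed.

Lemma Eb_sum2 (I1 I2 : finType) (c : I1 -> I2 -> R) (F : I1 -> I2 -> hist -> A -> R) :
  (forall b s, 0 <= c b s <= 1) -> (forall b s, bnd G C (F b s) 1) ->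
  Eb (fun e a => \sum_b \sum_s c b s * F b s e a) = \sum_b \sum_s c b s * Eb (F b s).
Proof.
move=> hc hF.
have hin : forall b, bnd G C (fun e a => \sum_s c b s * F b s e a) ((size (index_enum I2))%:R * 1).
  move=> b; apply: bnd_sum => //; move=> s; exact: bndZ.
rewrite (Eb_sum' _ (B := (size (index_enum I2))%:R * 1)) //; last by rewrite mulr1.
apply: eq_bigr => b _; rewrite (Eb_sum' _ (B := 1)) //; last by move=> s; exact: bndZ.
apply: eq_bigr => s _; rewrite (EbZ' (B := 1)) //; by case/andP: (hc b s).
Qed.

Variables (t : S) (a0 : A) (s1 : S).

Definition gE (e : hist) := extend e a0 s1.
Definition ind_ta (e : hist) (a : A) : R := ((e.2 == t) && (a == a0))%:R.
Definition Nf (h : hist) (e : hist) (a : A) := ind_ta e a * pi G (shift sg (gE e)) h.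
Definition Nn (h : hist) := Eb (Nf h).
Definition Np (h : hist) (b : A) := Eb (fun e a => Nf h e a * shift sg (gE e) h b).

Definition sgs : strategy := fun h b =>
  if isMax h.2 && (0 < Nn h) then Np h b / Nn h else strat0 G h b.

Lemma ind_bnd e a : 0 <= ind_ta e a <= 1.
Proof. rewrite /ind_ta; case: ((e.2 == t) && (a == a0)) => /=; rewrite ?ler01 ?lexx //. Qed.

Lemma Nf_bnd h e a : 0 <= Nf h e a <= 1.
Proof.
case/andP: (ind_bnd e a) => i0 i1; case/andP: (pi_bnd h (shift_valid (gE e) vs)) => p0 p1.
by rewrite mulr_ge0 //= mulr_ile1.
Qed.

Lemma sg_bnd g h b : isMax h.2 -> 0 <= shift sg g h b <= 1.
Proof. move=> hm; exact: distr_le1 (valid_distr (shift_valid g vs) hm). Qed.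

Lemma Nn_bnd h : 0 <= Nn h <= 1.
Proof. apply: Eb_bnd' ler01 _ => e a _; exact: Nf_bnd. Qed.

Lemma Np_bnd h b : isMax h.2 -> bnd G C (fun e a => Nf h e a * shift sg (gE e) h b) 1.
Proof.
move=> hm e a _; case/andP: (Nf_bnd h e a) => n0 n1; case/andP: (sg_bnd (gE e) b hm) => s0' s1'.
by rewrite mulr_ge0 //= mulr_ile1.
Qed.

Lemma Np_ge0 h b : isMax h.2 -> 0 <= Np h b.
Proof. by move=> hm; case/andP: (Eb_bnd' ler01 (Np_bnd b hm)). Qed.

Lemma Np_sum h : isMax h.2 -> \sum_b Np h b = Nn h.
Proof.
move=> hm; rewrite /Np -(Eb_sum' _ (B := 1)); last by move=> b; exact: Np_bnd.
  apply: Eb_ext' => e a _; rewrite -mulr_sumr.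
  by have [_ [-> _]] := valid_distr (shift_valid (gE e) vs) hm; rewrite mulr1.
exact: ler01.
Qed.

Lemma Np_Av h b : isMax h.2 -> b \notin Av h.2 -> Np h b = 0.
Proof.
move=> hm hb; rewrite /Np -Eb0; apply: Eb_ext' => e a _.
have [_ [_ hA]] := valid_distr (shift_valid (gE e) vs) hm.
case: (eqVneq (shift sg (gE e) h b) 0) => [->|/hA]; first by rewrite mulr0.
by rewrite (negbTE hb).
Qed.

Lemma NnS h b : isMax h.2 -> Nn h * sgs h b = Np h b.
Proof.
move=> hm; rewrite /sgs hm /=; case: ifP => hp.
  by rewrite mulrC divfK // gt_eqF.
have N0 : Nn h = 0.
  by case/andP: (Nn_bnd h) => n0 _; apply/eqP; rewrite eq_le n0 andbT leNgt hp.
rewrite N0 mul0r; symmetry.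
have := Np_sum hm; rewrite N0 => /psumr_eq0P; apply => // b' _; exact: Np_ge0.
Qed.

Lemma sgs_valid : valid_strategy G true sgs.
Proof.
move=> h hm; rewrite /sgs hm /=; case: (boolP (0 < Nn h)) => hp /=; last first.
  by have [? [? ?]] := strat0_distr wf h.
split; first by move=> b; rewrite divr_ge0 ?Np_ge0 // ltW.
split; first by rewrite -mulr_suml Np_sum // divff // gt_eqF.
move=> b; apply: contraR => hb; by rewrite Np_Av // mul0r.
Qed.

Lemma Nf_ext_max h e a b s'' : isMax h.2 ->
  Nf (extend h b s'') e a = Nf h e a * shift sg (gE e) h b.
Proof. by move=> hm; rewrite /Nf pi_extend hm mulrA. Qed.

Lemma Nf_ext_min h e a b s'' : ~~ isMax h.2 -> Nf (extend h b s'') e a = Nf h e a.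
Proof. by move=> hm; rewrite /Nf pi_extend (negbTE hm) mulr1. Qed.

Lemma reach_bnd' T (sg' tau : strategy) k h : valid_strategy G true sg' ->
  valid_strategy G false tau -> 0 <= reach T sg' tau k h <= 1.
Proof. by move=> v1 v2; rewrite reach_ge0 // reach_le1. Qed.

Lemma d_le1 s b s' : b \in Av s -> delta s b s' <= 1.
Proof.
move=> hb; rewrite -(d_sum1 wf hb) (bigD1 s') //= lerDl sumr_ge0 // => *; exact: d_ge0.
Qed.

Lemma mix_id T tau k h : valid_strategy G false tau ->
  Nn h * reach T sgs tau k h =
  Eb (fun e a => Nf h e a * reach T (shift sg (gE e)) tau k h).
Proof.
move=> vt; elim: k h => [|k ih] h.
  rewrite reach0; under Eb_ext' do rewrite reach0.
  case: ifP => _; first by rewrite mulr1; apply: Eb_ext' => *; rewrite mulr1.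
  by rewrite mulr0 (Eb_ext' (g := fun _ _ => 0)) ?Eb0 // => *; rewrite mulr0.
rewrite reachS; under Eb_ext' do rewrite reachS.
case: ifP => hT; first by rewrite mulr1; apply: Eb_ext' => *; rewrite mulr1.
rewrite /wsum /Defs.choice; case hm: (isMax h.2).
  pose c b s'' := if b \in Av h.2 then delta h.2 b s'' else 0.
  have hc : forall b s'', 0 <= c b s'' <= 1.
    by move=> b s''; rewrite /c; case: ifP => hb; rewrite ?lexx ?ler01 ?d_ge0 ?d_le1.
  transitivity (\sum_b \sum_s'' c b s'' * (Nn (extend h b s'') * reach T sgs tau k (extend h b s''))).
    rewrite mulr_sumr; apply: eq_bigr => b _; rewrite mulrA NnS // mulr_sumr.
    apply: eq_bigr => s'' _; rewrite /c; case: ifP => hb; last by rewrite Np_Av ?hb // !mul0r.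
    rewrite mulrCA; congr (_ * (_ * _)); rewrite /Nn /Np; apply: Eb_ext' => e a _.
    by rewrite Nf_ext_max.
  under eq_bigr do under eq_bigr do rewrite ih.
  rewrite -Eb_sum2 //; last first.
    move=> b s'' e a _; case/andP: (Nf_bnd (extend h b s'') e a) => n0 n1.
    have [r0 r1] := andP (reach_bnd' T k (extend h b s'') (shift_valid (gE e) vs) vt).
    by rewrite mulr_ge0 //= mulr_ile1.
  apply: Eb_ext' => e a _; rewrite mulr_sumr; apply: eq_bigr => b _.
  rewrite /c; case: (boolP (b \in Av h.2)) => hb /=.
    rewrite !mulr_sumr; apply: eq_bigr => s'' _; rewrite Nf_ext_max //.
    by ring.
  have [_ [_ hA]] := valid_distr (shift_valid (gE e) vs) hm.
  case: (eqVneq (shift sg (gE e) h b) 0) => [->|/hA hb2]; last by rewrite hb2 in hb.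
  by rewrite mul0r mulr0 big1 // => *; rewrite mul0r.
pose c b s'' := tau h b * delta h.2 b s''.
have hm' : ~~ isMax h.2 by rewrite hm.
have [t0 [t1 tA]] := valid_distr vt hm.
have hc : forall b s'', 0 <= c b s'' <= 1.
  move=> b s''; rewrite /c; have [->|/tA hb] := eqVneq (tau h b) 0; first by rewrite mul0r lexx ler01.
  case/andP: (distr_le1 b (valid_distr vt hm)) => a0' a1.
  by rewrite mulr_ge0 ?d_ge0 //= mulr_ile1 ?d_ge0 ?d_le1.
transitivity (\sum_b \sum_s'' c b s'' * (Nn (extend h b s'') * reach T sgs tau k (extend h b s''))).
  rewrite mulr_sumr; apply: eq_bigr => b _; rewrite mulr_sumr mulr_sumr; apply: eq_bigr => s'' _.
  rewrite /c (_ : Nn (extend h b s'') = Nn h); first by ring.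
  by apply: Eb_ext' => e a _; rewrite Nf_ext_min.
under eq_bigr do under eq_bigr do rewrite ih.
rewrite -Eb_sum2 //; last first.
  move=> b s'' e a _; case/andP: (Nf_bnd (extend h b s'') e a) => n0 n1.
  have [r0 r1] := andP (reach_bnd' T k (extend h b s'') (shift_valid (gE e) vs) vt).
  by rewrite mulr_ge0 //= mulr_ile1.
apply: Eb_ext' => e a _; rewrite mulr_sumr; apply: eq_bigr => b _.
rewrite !mulr_sumr; apply: eq_bigr => s'' _; rewrite Nf_ext_min //.
by rewrite /c; ring.
Qed.

Lemma mix_main T (w : hist -> R) tau :
  valid_strategy G false tau ->
  (forall e, 0 <= w e <= 1) ->
  (forall e tau', valid_strategy G false tau' ->
     w e <= preach G T (shift sg (gE e)) tau' ([::], s1)) ->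
  Eb (fun e a => ind_ta e a * w e) <= Nn ([::], s1) * preach G T sgs tau ([::], s1).
Proof.
move=> vt w01 hw.
have vg : forall e, valid_strategy G true (shift sg (gE e)) by move=> e; exact: shift_valid.
rewrite /preach -(supnZ (B := 1)); last 2 first.
- by case/andP: (Nn_bnd ([::], s1)).
- by move=> k; apply: (reach_le1 wf sgs_valid vt).
have NfE : forall e a, Nf ([::], s1) e a = ind_ta e a by move=> e a; rewrite /Nf /pi /= mulr1.
have -> : (fun k => Nn ([::], s1) * reach T sgs tau k ([::], s1)) =
   (fun k => Eb (fun e a => ind_ta e a * reach T (shift sg (gE e)) tau k ([::], s1))).
  by apply: funext => k; rewrite mix_id //; apply: Eb_ext' => e a _; rewrite NfE.
apply: le_trans (_ : Eb (fun e a => ind_ta e a * preach G T (shift sg (gE e)) tau ([::], s1))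
    <= _).
  apply: (Eb_le wf s0 vs (B := 1)) => //.
  - move=> e a _; case/andP: (ind_bnd e a) => i0 i1.
    have p0 := preach_ge0 wf (vg e) vt T ([::], s1); have p1 := preach_le1 wf (vg e) vt T ([::], s1).
    by rewrite mulr_ge0 //= mulr_ile1.
  - move=> e a _; case/andP: (ind_bnd e a) => i0 i1; rewrite ler_wpM2l //; exact: hw.
apply: (Eb_sup wf s0 vs (B := 1)); first exact: ler01.
- move=> k e a _; case/andP: (ind_bnd e a) => i0 i1.
  have [r0 r1] := andP (reach_bnd' T k ([::], s1) (vg e) vt).
  by rewrite mulr_ge0 //= mulr_ile1.
- move=> k e a _; case/andP: (ind_bnd e a) => i0 i1; rewrite ler_wpM2l //.
  exact: reach_monoS.
- move=> e a eps _ he; have [k hk] := preach_approx wf (vg e) vt T ([::], s1) he.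
  exists k; case/andP: (ind_bnd e a) => i0 i1.
  apply: le_trans (_ : ind_ta e a * (reach T (shift sg (gE e)) tau k ([::], s1) + eps) - eps <= _).
    by rewrite lerD2r ler_wpM2l // -lerBlDr ltW.
  by rewrite mulrDr -addrA gerDl subr_le0 ler_piMl // ltW.
Qed.

End Mix.

End P7.
Import P7.

Module P8.

Set Implicit Arguments.
Unset Strict Implicit.
Unset Printing Implicit Defensive.
Import Order.TTheory GRing.Theory Num.Theory.
Local Open Scope classical_set_scope.
Local Open Scope ring_scope.

Section Geo.
Variables (R : realType) (S A : finType) (n : nat) (G : game R S A).
Variable Tg : 'I_n -> {set S}.
Hypothesis wf : wf_game G.
Local Notation vec := (vec R n).

Lemma conv_fin (X : set vec) (I : finType) (wgt : I -> R) (pt : I -> vec) :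
  X 0 -> (forall p, X (pt p)) -> (forall p, 0 <= wgt p) -> \sum_p wgt p <= 1 ->
  conv X (\sum_p wgt p *: pt p).
Proof.
move=> X0 Xp w0 w1.
pose w := fun j : 'I_#|I|.+1 => if unlift ord0 j is Some k then wgt (enum_val k) else 1 - \sum_p wgt p.
pose q := fun j : 'I_#|I|.+1 => if unlift ord0 j is Some k then pt (enum_val k) else 0.
exists #|I|.+1, w, q.
split; first by move=> j; rewrite /w /q; case: (unlift ord0 j) => [k|]; split; rewrite ?subr_ge0.
have Ew : forall k, w (lift ord0 k) = wgt (enum_val k) by move=> k; rewrite /w liftK.
have Eq : forall k, q (lift ord0 k) = pt (enum_val k) by move=> k; rewrite /q liftK.
have Ew0 : w ord0 = 1 - \sum_p wgt p by rewrite /w unlift_none.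
have Eq0 : q ord0 = 0 by rewrite /q unlift_none.
split.
  rewrite big_ord_recl Ew0 (eq_bigr _ (fun k _ => Ew k)).
  by rewrite -(big_enum_val (A := predT) wgt) subrK.
rewrite big_ord_recl Eq0 scaler0 add0r (eq_bigr _ (fun k _ => congr2 (fun a b => a *: b) (Ew k) (Eq k))).
by rewrite -(big_enum_val (A := predT) (fun p => wgt p *: pt p)).
Qed.

Lemma foldr_msum (d : S -> R) (f : S -> set vec) (u : S -> vec) r :
  (forall s', f s' (u s')) ->
  foldr (fun s' acc => msum (scale_set (d s') (f s')) acc) [set 0] r
        (\sum_(s' <- r) d s' *: u s').
Proof.
move=> hu; elim: r => [|s' r ih] /=; first by rewrite big_nil.
rewrite big_cons; exists (d s' *: u s'); first by exists (u s').
by exists (\sum_(j <- r) d j *: u j).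
Qed.

Lemma ach_dwc s (v v' : vec) : achievable G Tg s v ->
  (forall i, 0 <= v' ord0 i <= v ord0 i) -> achievable G Tg s v'.
Proof.
move=> [v0 [sg [vs hs]]] hv; split; first by move=> i; case/andP: (hv i).
exists sg; split => // tau vt i; case/andP: (hv i) => _ h; exact: le_trans h (hs tau vt i).
Qed.

Lemma ach0 s : achievable G Tg s 0.
Proof.
split; first by move=> i; rewrite mxE.
exists (strat0 G); split; first exact: (strat0_valid wf).
move=> tau vt i; rewrite mxE prob_reachE.
exact: (preach_ge0 wf (strat0_valid wf (pl := true)) vt).
Qed.

End Geo.

End P8.
Import P8.

Module P9.

Set Implicit Arguments.
Unset Strict Implicit.
Unset Printing Implicit Defensive.
Import Order.TTheory GRing.Theory Num.Theory.
Local Open Scope classical_set_scope.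
Local Open Scope ring_scope.

Section Winf.
Variables (R : realType) (S A : finType) (G : game R S A).
Hypothesis wf : wf_game G.
Local Notation strategy := (strategy R S A).
Local Notation hist := (hist S A).
Variables (sg : strategy) (T : {set S}).
Hypothesis vs : valid_strategy G true sg.

Definition Ew (g : hist) : set R :=
  [set r | exists tau, valid_strategy G false tau /\ r = preach G T (shift sg g) tau ([::], g.2)].
Definition winf (g : hist) : R := inf (Ew g).

Lemma Ew_ne g : Ew g !=set0.
Proof. by exists (preach G T (shift sg g) (strat0 G) ([::], g.2)), (strat0 G); split => //; exact: (strat0_valid wf). Qed.

Lemma Ew_lb g : lbound (Ew g) 0.
Proof. move=> r [tau [vt ->]]; exact: (preach_ge0 wf (shift_valid g vs) vt). Qed.

Lemma Ew_hinf g : has_inf (Ew g).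
Proof. by split; [exact: Ew_ne | exists 0; exact: Ew_lb]. Qed.

Lemma winf_le g tau : valid_strategy G false tau ->
  winf g <= preach G T (shift sg g) tau ([::], g.2).
Proof.
move=> vt; apply: ge_inf; first by exists 0; exact: Ew_lb.
by exists tau.
Qed.

Lemma winf_bnd g : 0 <= winf g <= 1.
Proof.
apply/andP; split; first by apply: lb_le_inf; [exact: Ew_ne | exact: Ew_lb].
apply: le_trans (winf_le g (strat0_valid wf (pl := false))) _.
exact: (preach_le1 wf (shift_valid g vs) (strat0_valid wf (pl := false))).
Qed.

Lemma winf_approx g eps : 0 < eps -> exists tau, valid_strategy G false tau /\
  preach G T (shift sg g) tau ([::], g.2) <= winf g + eps.
Proof.
move=> he; have [r [tau [vt ->]] hr] := inf_adherent he (Ew_hinf g).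
by exists tau; split => //; apply: ltW.
Qed.

End Winf.

Section Main.
Variables (R : realType) (S A : finType) (n : nat) (G : game R S A).
Variable Tg : 'I_n -> {set S}.
Hypothesis wf : wf_game G.
Local Notation isMax := (isMax G).
Local Notation Av := (Av G).
Local Notation delta := (delta G).
Local Notation strategy := (strategy R S A).
Local Notation hist := (hist S A).
Local Notation vec := (vec R n).
Variable U : S -> set vec.
Hypothesis hUc : forall s, U s `<=` unit_cube (R := R) (n := n).
Hypothesis hAU : forall s, achievable G Tg s `<=` U s.
Variable C : {set S}.
Hypothesis hstay : forall t, t \in C -> ~~ isMax t ->
  exists b, b \in Av t /\ forall s', 0 < delta t b s' -> s' \in C.
Variables (s0 : S) (x : vec) (sg : strategy).
Hypothesis hs0 : s0 \in C.
Hypothesis vs : valid_strategy G true sg.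
Hypothesis x0 : forall i, 0 <= x ord0 i.
Hypothesis x1 : forall i, x ord0 i <= 1.
Hypothesis hsg : forall tau, valid_strategy G false tau ->
  forall i, x ord0 i <= prob_reach G sg tau s0 (Tg i).

Local Notation Eb := (Eb G C sg s0).
Local Notation good := (good G C).
Let Eb_ext' := @Eb_ext _ _ _ _ wf C sg s0 vs.
Let Eb_bnd' := @Eb_bnd _ _ _ _ wf C sg s0 vs.
Let Eb_le' := @Eb_le _ _ _ _ wf C sg s0 vs.

Definition Q (p : S * A) := Eb (ind_ta R p.1 p.2).
Definition wi i g := winf G sg (Tg i) g.
Definition Fi i (p : S * A) s' := fun (e : hist) (b : A) => ind_ta R p.1 p.2 e b * wi i (extend e p.2 s').
Definition Wv (p : S * A) s' : vec := if 0 < Q p then \row_i (Eb (Fi i p s') / Q p) else 0.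
Definition Jb i := [forall t in C, t \notin Tg i].
Definition cW (p : S * A) s' := if p.2 \in Av p.1 then delta p.1 p.2 s' else 0.
Definition Yv i := \sum_p \sum_s' cW p s' * (Q p * Wv p s' ord0 i).
Definition Pb (p : S * A) := mexit G C p && (p.2 \in Av p.1).
Definition fw i (e : hist) (b : A) := \sum_s' delta e.2 b s' * wi i (extend e b s').

Lemma ind_bnd' p : bnd G C (ind_ta R p.1 p.2) 1.
Proof. move=> e b _; exact: ind_bnd. Qed.

Lemma Q_bnd p : 0 <= Q p <= 1.
Proof. exact: Eb_bnd' ler01 (ind_bnd' p). Qed.

Lemma wi_bnd i g : 0 <= wi i g <= 1.
Proof. exact: winf_bnd. Qed.

Lemma Fi_bnd i p s' : bnd G C (Fi i p s') 1.
Proof.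
move=> e b _; case/andP: (ind_bnd R p.1 p.2 e b) => a1 a2; case/andP: (wi_bnd i (extend e p.2 s')) => b1 b2.
by rewrite /Fi mulr_ge0 //= mulr_ile1.
Qed.

Lemma Wv_ach p s' : achievable G Tg s' (Wv p s').
Proof.
rewrite /Wv; case: ifP => hq; last exact: ach0.
split.
  move=> i; rewrite mxE; case/andP: (Eb_bnd' ler01 (Fi_bnd i p s')) => h0 _; by rewrite divr_ge0 // ltW.
exists (sgs G C sg s0 p.1 p.2 s'); split; first exact: (sgs_valid wf C s0 vs p.1 p.2 s').
move=> tau vt i; rewrite mxE prob_reachE ler_pdivrMr // mulrC.
have NnE : Nn G C sg s0 p.1 p.2 s' ([::], s') = Q p.
  by rewrite /Nn /Q; apply: Eb_ext' => e b _; rewrite /Nf /pi /= mulr1.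
rewrite -NnE; apply: (mix_main wf C s0 vs p.1 (w := fun e => wi i (gE p.2 s' e))) => //.
  move=> e; exact: wi_bnd.
move=> e tau' vt'; exact: (@winf_le _ _ _ _ wf sg (Tg i) vs (gE p.2 s' e) _ vt').
Qed.

Lemma Wv_bnd p s' i : 0 <= Wv p s' ord0 i <= 1.
Proof.
have := Wv_ach p s'; move=> /[dup] /hAU /hUc hc [h0 _].
by apply/andP; split; [exact: h0 | case/andP: (hc i)].
Qed.

Lemma EFi i p s' : Eb (Fi i p s') = Q p * Wv p s' ord0 i.
Proof.
rewrite /Wv; case: ifP => hq; first by rewrite mxE mulrC divfK // gt_eqF.
rewrite mxE mulr0; apply/eqP; rewrite eq_le; apply/andP; split; last first.
  by case/andP: (Eb_bnd' ler01 (Fi_bnd i p s')).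
have hQ : Q p = 0.
  by case/andP: (Q_bnd p) => q0 _; apply/eqP; rewrite eq_le q0 andbT leNgt hq.
rewrite -hQ; apply: Eb_le' ler01 (ind_bnd' p) _ => e b _.
case/andP: (ind_bnd R p.1 p.2 e b) => a1 a2; case/andP: (wi_bnd i (extend e p.2 s')) => b1 b2.
by rewrite /Fi ler_piMr.
Qed.


Lemma fw_bnd i : bnd G C (fw i) 1.
Proof.
move=> e b /andP [_ bA]; apply/andP; split.
  apply: sumr_ge0 => s' _; rewrite mulr_ge0 ?d_ge0 //; by case/andP: (wi_bnd i (extend e b s')).
rewrite -(d_sum1 wf bA); apply: ler_sum => s' _; rewrite ler_piMr ?d_ge0 //.
by case/andP: (wi_bnd i (extend e b s')).
Qed.

Lemma decomp_x i : Jb i -> x ord0 i <= Eb (fw i).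
Proof.
move=> hJ; have hTC : forall t, t \in C -> t \notin Tg i.
  by move=> t ht; move/forallP/(_ t): hJ; rewrite ht.
apply/ler_addgt0Pr => eps he.
have [taug htg] := boolp.choice (fun g => winf_approx wf (Tg i) vs g he).
have vtg : forall g, valid_strategy G false (taug g) by move=> g; case: (htg g).
have vgl : valid_strategy G false (tgl G C taug).
  by apply: glue_valid => //; exact: (tau0_valid wf C).
apply: le_trans (hsg vgl i) _; rewrite prob_reachE.
apply: le_trans (decomp_preach wf vs hstay hTC vtg hs0) _.
have e0 : 0 <= eps by exact: ltW.
have hcst : bnd G C (fun _ _ => eps) eps by move=> *; rewrite e0 lexx.
apply: le_trans (_ : Eb (fun e b => fw i e b + eps) <= _).
  apply: (Eb_le wf s0 vs (B := 1 + eps)); first by rewrite addr_ge0.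
    move=> e b hg; case/andP: (fw_bnd i hg) => f0 f1; by rewrite addr_ge0 //= lerD2r.
  move=> e b /andP [_ bA]; rewrite /fP /fw.
  rewrite -[X in _ <= _ + X]mulr1 -(d_sum1 wf bA) mulr_sumr -big_split /=.
  apply: ler_sum => s' _; rewrite [eps * _]mulrC -mulrDr ler_wpM2l ?d_ge0 //.
  by case: (htg (extend e b s')).
rewrite (EbD wf s0 vs (B1 := 1) (B2 := eps)) //; last exact: fw_bnd.
by rewrite lerD2l; case/andP: (Eb_bnd' e0 hcst).
Qed.

Lemma ind_sum_pt (e : hist) (b : A) (F : S * A -> R) :
  \sum_p ind_ta R p.1 p.2 e b * F p = F (e.2, b).
Proof.
rewrite (bigD1 (e.2, b)) //= /ind_ta !eqxx mul1r big1 ?addr0 // => p hp.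
case: andP => [[/eqP h1 /eqP h2]|_]; last by rewrite mul0r.
by exfalso; move: hp; rewrite h1 h2 -surjective_pairing eqxx.
Qed.

Lemma Efw i : Eb (fw i) = Yv i.
Proof.
have hc : forall (p : S * A) s', 0 <= cW p s' <= 1.
  by move=> p s'; rewrite /cW; case: ifP => hb; rewrite ?lexx ?ler01 ?d_ge0 ?(d_le1 wf).
rewrite (Eb_ext' (g := fun e b => \sum_p \sum_s' cW p s' * Fi i p s' e b)).
  rewrite (Eb_sum2 wf s0 vs hc (Fi_bnd i)) /Yv; apply: eq_bigr => p _.
  by apply: eq_bigr => s' _; rewrite EFi.
move=> e b /andP [_ bA]; rewrite /Fi.
under eq_bigr do under eq_bigr do rewrite mulrCA.
under eq_bigr do rewrite -mulr_sumr.
by rewrite ind_sum_pt /fw /cW /= bA.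
Qed.

Lemma Q_nPb p : ~~ Pb p -> Q p = 0.
Proof.
move=> hp; rewrite /Q -(Eb0 G C sg s0); apply: Eb_ext' => e b hg.
rewrite /ind_ta; case: andP => [[/eqP h1 /eqP h2]|] //.
by exfalso; move: hp hg; rewrite /Pb /P4.good h1 h2 -surjective_pairing => /negP.
Qed.

Lemma sumQ : \sum_p Q p <= 1.
Proof.
rewrite /Q -(Eb_sum wf s0 vs (index_enum _) (B := 1)) //; last by move=> p; exact: ind_bnd'.
have hb : bnd G C (fun e b => \sum_(p <- index_enum _) ind_ta R p.1 p.2 e b) 1.
  move=> e b _.
  have -> : \sum_(p <- index_enum _) ind_ta R p.1 p.2 e b = 1.
    by under eq_bigr do rewrite -[ind_ta _ _ _ _ _]mulr1; rewrite (ind_sum_pt e b (fun _ => 1)).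
  by rewrite ler01 lexx.
by case/andP: (Eb_bnd' ler01 hb).
Qed.

Definition kap i := if Jb i && (0 < Yv i) then x ord0 i / Yv i else 0.

Lemma Yv_ge i : Jb i -> x ord0 i <= Yv i.
Proof. by move=> hJ; rewrite -Efw; exact: decomp_x. Qed.

Lemma kap_bnd i : 0 <= kap i <= 1.
Proof.
rewrite /kap; case: ifP => [/andP [hJ hY]|_]; last by rewrite lexx ler01.
apply/andP; split; first by rewrite divr_ge0 ?x0 // ltW.
by rewrite ler_pdivrMr // mul1r Yv_ge.
Qed.

Lemma kapY i : Jb i -> kap i * Yv i = x ord0 i.
Proof.
move=> hJ; rewrite /kap hJ /=; case: ifP => hY; first by rewrite divfK // gt_eqF.
rewrite mul0r; apply/eqP; rewrite eq_le x0 /=.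
by apply: le_trans (Yv_ge hJ) _; rewrite leNgt hY.
Qed.

Lemma kap_nJ i : ~~ Jb i -> kap i = 0.
Proof. by rewrite /kap => /negbTE ->. Qed.

Definition Wsc (p : S * A) s' : vec := \row_i (kap i * Wv p s' ord0 i).

Lemma Wsc_ach p s' : achievable G Tg s' (Wsc p s').
Proof.
apply: ach_dwc (Wv_ach p s') _ => i; rewrite mxE.
case/andP: (kap_bnd i) => k0 k1; case/andP: (Wv_bnd p s' i) => w0 w1.
by rewrite mulr_ge0 //= ler_piMl.
Qed.

Definition pt (p : S * A) : vec :=
  if Pb p then \sum_s' delta p.1 p.2 s' *: Wsc p s' else 0.

Definition ypt : vec := \sum_p Q p *: pt p.

Lemma ypt_entry i : ypt ord0 i = kap i * Yv i.
Proof.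
rewrite /ypt /Yv summxE mulr_sumr; apply: eq_bigr => p _; rewrite mxE /pt.
case: ifP => hp.
  move: (hp) => /andP [_ hA]; rewrite summxE /cW hA !mulr_sumr; apply: eq_bigr => s' _.
  by rewrite !mxE; ring.
by rewrite Q_nPb ?hp // mul0r big1 ?mulr0 // => s' _; rewrite mul0r mulr0.
Qed.

Lemma sa_in t a (u : S -> vec) : (forall s', U s' (u s')) ->
  (forall i, 0 <= (\sum_s' delta t a s' *: u s') ord0 i <= 1) ->
  sa_val G Tg U t a (\sum_s' delta t a s' *: u s').
Proof.
move=> hu hb; split.
  exists 0.
    split; first by move=> i; rewrite mxE.
    by exists (ind R Tg t) => // i; rewrite !mxE; case: ifP.
  exists (\sum_(s' <- enum S) delta t a s' *: u s'); first exact: foldr_msum.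
  by rewrite add0r big_enum.
split; first by move=> i; case/andP: (hb i).
by exists (const_mx 1) => // i; rewrite mxE; case/andP: (hb i).
Qed.

Lemma sa0 t a : sa_val G Tg U t a 0.
Proof.
have := @sa_in t a (fun _ => 0) (fun s' => hAU (ach0 Tg wf s')) _.
rewrite big1 => [|s' _]; last by rewrite scaler0.
apply => i; by rewrite mxE lexx ler01.
Qed.

Lemma exit_main : exit_set G Tg U C x.
Proof.
have X0 : forall z, z = 0 -> [set z | (exists s a, [/\ s \in C, isMax s, a \in Av s & exits G C s a] /\
      sa_val G Tg U s a z) \/
     (~ (exists s a, [/\ s \in C, isMax s, a \in Av s & exits G C s a]) /\ z = 0)] z.
  move=> z ->; case: (pselect (exists s a, [/\ s \in C, isMax s, a \in Av s & exits G C s a])).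
    by move=> [t [a hP]]; left; exists t, a; split => //; exact: sa0.
  by move=> hn; right.
split; last first.
  split; first exact: x0.
  by exists (const_mx 1) => // i; rewrite mxE.
exists (x - ypt).
  split.
    move=> i; rewrite !mxE ypt_entry; case: (boolP (Jb i)) => hJ.
      by rewrite kapY // subrr.
    by rewrite kap_nJ // mul0r subr0.
  exists (\sum_(s in C) ind R Tg s) => // i; rewrite !mxE ypt_entry summxE.
  case: (boolP (Jb i)) => hJ.
    by rewrite kapY // subrr sumr_ge0 // => s _; rewrite mxE; case: ifP.
  rewrite kap_nJ // mul0r subr0; apply: le_trans (x1 i) _.
  move: hJ; rewrite negb_forall_in => /existsP [t /andP [tC]]; rewrite negbK => tT.
  by rewrite (bigD1 t) //= mxE tT lerDl sumr_ge0 // => s _; rewrite mxE; case: ifP.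
exists ypt; last by rewrite subrK.
apply: conv_fin.
- exact: X0.
- move=> p; rewrite /pt; case: (boolP (Pb p)) => hp; last exact: X0.
  left; exists p.1, p.2; split.
    move: hp => /andP [/and3P [h1 h2 /existsP [s' /andP [h3 h4]]] h5].
    by split => //; exists s'.
  apply: sa_in => [s'|i]; first exact: hAU (Wsc_ach p s').
  rewrite summxE; apply/andP; split.
    apply: sumr_ge0 => s' _; rewrite !mxE mulr_ge0 ?d_ge0 //; last first.
      by case/andP: (kap_bnd i) => k0 _; case/andP: (Wv_bnd p s' i) => w0 _; rewrite mulr_ge0.
    by case/andP: hp.
  have hA : p.2 \in Av p.1 by case/andP: hp.
  rewrite -(d_sum1 wf hA); apply: ler_sum => s' _; rewrite !mxE ler_piMr ?d_ge0 //.
  case/andP: (kap_bnd i) => k0 k1; case/andP: (Wv_bnd p s' i) => w0 w1.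
  by rewrite mulr_ile1.
- by move=> p; case/andP: (Q_bnd p).
- exact: sumQ.
Qed.

End Main.

End P9.
Import P9.

Module P10.

Set Implicit Arguments.
Unset Strict Implicit.
Unset Printing Implicit Defensive.
Import Order.TTheory GRing.Theory Num.Theory.
Local Open Scope classical_set_scope.
Local Open Scope ring_scope.

Section Final.
Variables (R : realType) (S A : finType) (n : nat) (G : game R S A).
Variable Tg : 'I_n -> {set S}.
Local Notation isMax := (isMax G).
Local Notation Av := (Av G).
Local Notation delta := (delta G).

Lemma cover_step (L : S -> set 'rV[R]_n) (P : set (set (dir R n))) s :
  (forall d, Dset d -> exists Rg, P Rg /\ Rg d) ->
  forall d, Dset d -> exists Rg,
    refine P [set Rg | (exists B, Rg = R_B G Tg L s B) /\ Rg !=set0] Rg /\ Rg d.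
Proof.
move=> hP d' hd; have [R1 [h1 d1]] := hP d' hd.
have d2 : R_B G Tg L s (argmin_act G Tg L s d') d' by split.
exists (R1 `&` R_B G Tg L s (argmin_act G Tg L s d')); split => //.
split; last by exists d'.
exists R1, (R_B G Tg L s (argmin_act G Tg L s d')); split => //; split => //.
by split; [exists (argmin_act G Tg L s d') | exists d'].
Qed.

Lemma cover_foldl (L : S -> set 'rV[R]_n) l (P : set (set (dir R n))) :
  (forall d, Dset d -> exists Rg, P Rg /\ Rg d) ->
  forall d, Dset d -> exists Rg,
   foldl (fun P s => refine P [set Rg | (exists B, Rg = R_B G Tg L s B) /\ Rg !=set0]) P l Rg
   /\ Rg d.
Proof.
elim: l P => [|s l ih] P hP //=; apply: ih; exact: cover_step.
Qed.

Lemma regions_cover (T : {set S}) (L : S -> set 'rV[R]_n) d :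
  Dset d -> exists Rg, GET_REGIONS G Tg T L Rg /\ Rg d.
Proof.
apply: cover_foldl => d' hd; by exists (Dset (R := R) (n := n)).
Qed.

Lemma sec_stay (T : {set S}) (Av' : S -> {set A}) C :
  (forall s a, a \in Av' s -> a \in Av s) ->
  MEC_in G T Av' C -> forall t, t \in C -> ~~ isMax t ->
  exists b, b \in Av t /\ forall s', 0 < delta t b s' -> s' \in C.
Proof.
move=> Asub [[Cne [CT [B [Bne [Bsub [hno hconn]]]]]] _] t tC _.
have stay : forall a, a \in B -> a \in Av' t -> forall s', 0 < delta t a s' -> s' \in C.
  move=> a aB aA s' hd; apply/negPn/negP => hs'.
  by apply: (hno t a tC aB aA); exists s'.
case: (pselect (exists y, y \in C /\ y <> t)) => [[y [yC yt]]|hn].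
  have := hconn t y tC yC; case/connectP => p; case: p => [|z p] /=.
    by move=> _ hy; exfalso; apply: yt.
  case/andP => /and3P [_ _ /existsP [a /andP [aB /andP [aA _]]]] _ _.
  by exists a; split; [exact: Asub | exact: stay].
have /set0Pn [a aB] := Bne.
have := fintype.subsetP Bsub a aB; rewrite inE => /existsP [s /andP [sC aA]].
have st : s = t.
  by apply: contrapT => hst; apply: hn; exists s.
by subst s; exists a; split; [exact: Asub | exact: stay].
Qed.

Lemma restr_sub (T : {set S}) L d s a : a \in restr_av G Tg T L d s -> a \in Av s.
Proof.
by rewrite /restr_av; case: ifP => // _; rewrite /argmin_act inE => /andP [].
Qed.

End Final.


End P10.
Import P10.

Theorem lemma4p4 (R : realType) (S A : finType) (n : nat) (G : game R S A)
    (Tg : 'I_n -> {set S}) (L U : S -> set 'rV[R]_n) :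
  wf_game G ->
  (forall s, L s `<=` (@unit_cube R n)) ->
  (forall s, U s `<=` (@unit_cube R n)) ->
  (forall s, L s `<=` achievable G Tg s) ->
  (forall s, achievable G Tg s `<=` U s) ->
  forall s, DEFLATE_SECs G Tg L U s `<=` U s /\
            achievable G Tg s `<=` DEFLATE_SECs G Tg L U s.
Proof.
move=> wf hLc hUc hLA hAU s; split.
  move=> x [[_ hU]|[_ [->|[T [Rg [hT sT hG hrc]]]]]] //.
    exact: hAU (ach0 Tg wf s).
  by case: hrc => [[_ [C [_ _ hU _ _]]]|[_ [hU _]]].
move=> x hx.
case: (pselect (exists T, MEC G T /\ s \in T)) => [hT|hnT]; last first.
  by left; split => //; exact: hAU.
right; split => //.
case: (pselect (x = 0)) => [->|xn0]; first by left.
right.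
have xc : unit_cube x := hUc s x (hAU s x hx).
have [T [mT sT]] := hT.
have hd : Dset (dirof x) by exists x.
have [Rg [hG hRg]] := regions_cover G Tg T L hd.
exists T, Rg; split => //.
case: (pselect (exists C, FIND_SECs G Tg T L Rg C /\ s \in C)) => [[C [hC sC]]|hnC]; last first.
  by right; split => //; split; [exact: hAU | split].
left; split; first by exists C.
exists C; split => //; first exact: hAU.
case: hx => x0 [sg [vs hsg]].
apply: (exit_main wf hUc hAU _ sC vs x0 _ hsg).
  exact: (sec_stay (@restr_sub _ _ _ _ G Tg T L (pick_dir Rg)) hC).
by move=> i; case/andP: (xc i).
Qed.
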